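(* Let $\chi\in\chi(G)$ be a character and $\lambda\in\Lambda^\chi$. There is a unique maximal subset $\mathcal M\subset[n]$ with respect to the property $L(\mathcal M)\subset S^\chi_\lambda$. Moreover $\mathcal M=\{i\in[n]:\langle\chi_i,\lambda\rangle\ge0\}$, and in particular $V([n]\setminus\mathcal M)=X_\lambda$.
   Context: $G$ diagonalizable over $\mathbf C$ acting on $X=\mathbf A^n_{\mathbf C}$ by $g\cdot x=(\chi_1(g)x_1,\dots,\chi_n(g)x_n)$. $\chi(G)$ characters, $\Gamma(G)$ one-parameter subgroups, pairing $\chi(\lambda(t))=t^{\langle\chi,\lambda\rangle}$ (extended to $\mathbf R$); fixed norm on $\Gamma(G)$ from an inner product on $\Gamma(G)_{\mathbf R}$ integral on $\Gamma(G)$. $[n]=\{1,\dots,n\}$. $X_\lambda=\{x:\lim_{t\to0}\lambda(t)x\text{ exists}\}=\{x:x_i=0\text{ whenever }\langle\chi_i,\lambda\rangle<0\}$. $x$ is $\chi$-unstable if some $\lambda$ with existing limit has $\langle\chi,\lambda\rangle<0$; for unstable $x$, $\lambda_{\chi,x}$ is the unique indivisible one-parameter subgroup with existing limit minimizing $\langle\chi,\lambda\rangle/\|\lambda\|$ among nonzero such. $\Lambda^\chi=\{\lambda_{\chi,x}:x\text{ unstable}\}$, $S^\chi_\lambda=\{x\text{ unstable}:\lambda_{\chi,x}=\lambda\}$. For $S\subset[n]$: $V(S)=\{x:x_i=0\ \forall i\in S\}$, $L(S)=\{x:x_i\ne0\iff i\in S\}$. *)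

(* Defs.v *)
From HB Require Import structures.
From mathcomp Require Import all_boot all_order all_algebra.
From mathcomp Require Import complex.
From mathcomp Require Import reals.
Set Implicit Arguments. Unset Strict Implicit. Unset Printing Implicit Defensive.
Import Order.TTheory GRing.Theory Num.Theory.
Local Open Scope ring_scope.

(* Model:
   - Gamma(G) = Z^r, one-parameter subgroups are 'rV[int]_r;
   - chi(G) is represented through its pairing with Gamma(G): a character
     is the row vector 'rV[int]_r of its values <chi, e_j>, and
     <chi, lambda> is the dot product;
   - the inner product on Gamma(G)_R is given by a symmetric positive definite
     integer matrix Q (integral on Gamma(G));
   - points of X = A^n_C are row vectors 'rV[R[i]]_n, R the real numbers. *)

Definition pairing (r : nat) (chi lam : 'rV[int]_r) : int :=
  \sum_(j < r) chi 0 j * lam 0 j.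

Definition ipQ (r : nat) (Q : 'M[int]_r) (l m : 'rV[int]_r) : int :=
  (l *m Q *m m^T) 0 0.

Definition inner_product_mx (R : realType) (r : nat) (Q : 'M[int]_r) : Prop :=
  Q^T = Q /\
  forall v : 'rV[R]_r, v != 0 -> 0 < (v *m map_mx (fun z : int => z%:~R) Q *m v^T) 0 0.

Definition normQ (R : realType) (r : nat) (Q : 'M[int]_r) (l : 'rV[int]_r) : R :=
  Num.sqrt ((ipQ Q l l)%:~R).

Definition indivisible (r : nat) (l : 'rV[int]_r) : Prop :=
  forall (k : int) (m : 'rV[int]_r), l = k *: m -> `|k| = 1.

(* X_lambda: lim_{t->0} lambda(t) x exists *)
Definition X_lam (R : realType) (n r : nat) (chis : 'I_n -> 'rV[int]_r)
  (l : 'rV[int]_r) (x : 'rV[R[i]]_n) : Prop :=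
  forall i : 'I_n, pairing (chis i) l < 0 -> x 0 i = 0.

Definition unstable (R : realType) (n r : nat) (chis : 'I_n -> 'rV[int]_r)
  (chi : 'rV[int]_r) (x : 'rV[R[i]]_n) : Prop :=
  exists l : 'rV[int]_r, X_lam chis l x /\ pairing chi l < 0.

Definition ratio (R : realType) (r : nat) (Q : 'M[int]_r) (chi l : 'rV[int]_r) : R :=
  (pairing chi l)%:~R / normQ R Q l.

Definition is_lambda_chi (R : realType) (n r : nat) (chis : 'I_n -> 'rV[int]_r)
  (Q : 'M[int]_r) (chi : 'rV[int]_r) (x : 'rV[R[i]]_n) (l : 'rV[int]_r) : Prop :=
  indivisible l /\ X_lam chis l x /\
  forall m : 'rV[int]_r, m != 0 -> X_lam chis m x -> ratio R Q chi l <= ratio R Q chi m.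

Definition S_chi (R : realType) (n r : nat) (chis : 'I_n -> 'rV[int]_r)
  (Q : 'M[int]_r) (chi l : 'rV[int]_r) (x : 'rV[R[i]]_n) : Prop :=
  unstable chis chi x /\ is_lambda_chi chis Q chi x l.

Definition Lambda_chi (R : realType) (n r : nat) (chis : 'I_n -> 'rV[int]_r)
  (Q : 'M[int]_r) (chi l : 'rV[int]_r) : Prop :=
  exists x : 'rV[R[i]]_n, S_chi chis Q chi l x.

Definition Vset (R : realType) (n : nat) (S : {set 'I_n}) (x : 'rV[R[i]]_n) : Prop :=
  forall i, i \in S -> x 0 i = 0.

Definition Lset (R : realType) (n : nat) (S : {set 'I_n}) (x : 'rV[R[i]]_n) : Prop :=
  forall i, x 0 i != 0 <-> i \in S.

(* Main.v *)
Require Import Defs.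
From HB Require Import structures.
From mathcomp Require Import all_boot all_order all_algebra.
From mathcomp Require Import complex.
From mathcomp Require Import reals.
Import Order.TTheory GRing.Theory Num.Theory.
Local Open Scope ring_scope.

Lemma normQ_gt0 (R : realType) (r : nat) (Q : 'M[int]_r) (hQ : inner_product_mx R Q)
  (l : 'rV[int]_r) : l != 0 -> 0 < normQ R Q l.
Proof.
move=> l0; rewrite /normQ sqrtr_gt0.
have v0 : map_mx (fun z : int => z%:~R : R) l != 0.
  apply: contra l0 => /eqP H; apply/eqP/matrixP => i j.
  have := congr1 (fun A : 'rV[R]_r => A i j) H; rewrite !mxE => /eqP.
  by rewrite intr_eq0 => /eqP.
have := hQ.2 _ v0.
have -> : (map_mx (fun z : int => z%:~R : R) l *m map_mx (fun z : int => z%:~R) Q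
   *m (map_mx (fun z : int => z%:~R : R) l)^T) 0 0 = (ipQ Q l l)%:~R.
  by rewrite /ipQ map_trmx -!map_mxM mxE.
done.
Qed.

Lemma ratio_lt0 (R : realType) (r : nat) (Q : 'M[int]_r) (hQ : inner_product_mx R Q)
  (chi l : 'rV[int]_r) : l != 0 -> pairing chi l < 0 -> @Defs.ratio R r Q chi l < 0.
Proof.
move=> l0 p0; have s0 := @normQ_gt0 _ _ _ hQ _ l0.
rewrite /ratio pmulr_llt0 ?invr_gt0 //.
by rewrite ltrz0.
Qed.

Lemma ratio_neg (R : realType) (r : nat) (Q : 'M[int]_r)
  (chi l : 'rV[int]_r) : @Defs.ratio R r Q chi l < 0 -> pairing chi l < 0.
Proof.
rewrite /ratio; apply: contraTT; rewrite -!leNgt => p0.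
apply: divr_ge0; first by rewrite ler0z.
exact: sqrtr_ge0.
Qed.

Theorem lemma3p15 (R : realType) (n r : nat) (chis : 'I_n -> 'rV[int]_r)
  (Q : 'M[int]_r) (hQ : inner_product_mx R Q)
  (chi lam : 'rV[int]_r) (hlam : Lambda_chi R chis Q chi lam) :
  let P := fun M : {set 'I_n} =>
    forall x : 'rV[R[i]]_n, Lset M x -> S_chi chis Q chi lam x in
  let M := [set i : 'I_n | 0 <= pairing (chis i) lam] in
  (* M has the property and is maximal *)
  (P M /\ (forall M' : {set 'I_n}, P M' -> M \subset M' -> M' = M)) /\
  (* every maximal subset with the property equals M (uniqueness) *)
  (forall M' : {set 'I_n}, P M' ->
     (forall M'' : {set 'I_n}, P M'' -> M' \subset M'' -> M'' = M') -> M' = M) /\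
  (* V([n] \ M) = X_lambda *)
  (forall x : 'rV[R[i]]_n, Vset (~: M) x <-> X_lam chis lam x).
Proof.
move=> P M.
case: hlam => x0 [[l [Xl pl]] [ind [Xlam0 minl]]].
have PM : P M.
  move=> x Lx.
  have Xx : X_lam chis lam x.
    move=> i hi; apply/eqP; apply: contraT => /(proj1 (Lx i)).
    by rewrite inE leNgt hi.
  have minx : forall m, m != 0 -> X_lam chis m x -> @Defs.ratio R r Q chi lam <= @Defs.ratio R r Q chi m.
    move=> m m0 Xm; apply: minl m0 _ => i hi.
    apply: Xlam0; have := Xm i hi => /eqP xi.
    have : i \notin M by apply/negP => /(proj2 (Lx i)); rewrite xi.
    by rewrite inE -ltNge.
  split; last by [].
  exists lam; split => //.
  have l0 : l != 0.
    by apply: contraTneq pl => ->; rewrite /pairing big1 // => j _; rewrite mxE mulr0.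
  apply: (@ratio_neg R _ Q) (le_lt_trans (minl l l0 Xl) (@ratio_lt0 _ _ _ hQ chi _ l0 pl)).
have sub : forall M', P M' -> M' \subset M.
  move=> M' PM'; apply/subsetP => i iM'.
  pose x : 'rV[R[i]]_n := \row_j (if j \in M' then 1 else 0).
  have Lx : Lset M' x.
    move=> j; rewrite mxE; case: (j \in M'); split => //.
    by rewrite oner_neq0.
    by rewrite eqxx.
  have [_ [_ [Xx _]]] := PM' x Lx.
  rewrite inE leNgt; apply/negP => hi.
  have := Xx i hi; rewrite mxE iM' => /eqP; by rewrite oner_eq0.
split; first split => //.
  by move=> M' PM' sMM'; apply/eqP; rewrite eqEsubset sMM' sub.
split.
  by move=> M' PM' maxM'; apply/esym/maxM' => //; apply: sub.
move=> x; split.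
  by move=> V i hi; apply: V; rewrite !inE -ltNge.
by move=> X i; rewrite !inE -ltNge; apply: X.
Qed.
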